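(* If $(S,K,I)$ is a split graph and $C$ is an induced cycle in the factor graph $\Phi(S)$, then $|C|\leq 4$.
   Context: A split graph $(S,K,I)$ is a graph $S$ together with a fixed partition $V(S)=K\dot\cup I$, where $K$ is a clique and $I$ is an independent set. For a vertex $v$ of $S$, $N_v$ denotes its open neighborhood in $S$ and $d_v=|N_v|$; $\eta_{uv}=|N_u\cap N_v|$. The factor graph $\Phi(S)$ is the loopless multigraph with vertex set $I$ in which, for distinct $u,v\in I$, there is one edge joining $u$ and $v$ for each 2-switch of $S$ acting on $u$ and $v$ (a 2-switch replaces edges $ab,cd$ with $ac,bd$ when $ab,cd\in E(S)$ and $ac,bd\notin E(S)$); equivalently, the multiplicity of $uv$ is $\sigma_{uv}=(d_u-\eta_{uv})(d_v-\eta_{uv})$, and $u,v$ are adjacent iff $\sigma_{uv}>0$. An induced cycle $C=v_1\ldots v_nv_1$ ($n\geq 3$) in $\Phi(S)$ consists of distinct vertices with $v_iv_{i+1}$ and $v_nv_1$ adjacent and no other pair adjacent (multiplicities ignored); $|C|=n$. *)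

(* Defs.v *)
From mathcomp Require Import all_boot.
Set Implicit Arguments. Unset Strict Implicit. Unset Printing Implicit Defensive.

Definition simple_graph (T : finType) (e : rel T) : Prop :=
  symmetric e /\ irreflexive e.

Definition split_graph (T : finType) (e : rel T) (K I : {set T}) : Prop :=
  [/\ simple_graph e,
      K :&: I = set0,
      K :|: I = setT,
      (forall x y, x \in K -> y \in K -> x != y -> e x y)
    & (forall x y, x \in I -> y \in I -> ~~ e x y)].

Section Factor.
Variables (T : finType) (e : rel T).

Definition nbhd (v : T) : {set T} := [set w | e v w].
Definition deg (v : T) : nat := #|nbhd v|.
Definition eta (u v : T) : nat := #|nbhd u :&: nbhd v|.

(* multiplicity of uv in the factor graph *)
Definition sigma (u v : T) : nat := (deg u - eta u v) * (deg v - eta u v).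

Definition factor_adj (I : {set T}) (u v : T) : bool :=
  [&& u \in I, v \in I, u != v & 0 < sigma u v].

Definition induced_cycle (I : {set T}) (c : seq T) : Prop :=
  [/\ 3 <= size c, uniq c, all (fun x => x \in I) c &
      forall (x0 : T) i j, i < size c -> j < size c ->
        (factor_adj I (nth (x0) c i) (nth (x0) c j)
         <-> (j = (i.+1) %% size c \/ i = (j.+1) %% size c))].
End Factor.

(* Main.v *)
Require Import Defs.
From mathcomp Require Import all_boot.
From mathcomp Require Import zify.

Lemma diff_gt0 (T : finType) (A B : {set T}) :
  (0 < #|A| - #|A :&: B|) = ~~ (A \subset B).
Proof.
rewrite subn_gt0; case: (boolP (A \subset B)) => h.
  by rewrite (setIidPl h) ltnn.
rewrite ltn_neqAle subset_leq_card ?subsetIl // andbT.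
apply/negP => /eqP E; apply/negP: h.
have := (subset_leqif_cards (subsetIl A B)).2.
rewrite E eqxx => /esym H.
by rewrite negbK -(eqP H) subsetIr.
Qed.

Lemma adjE (T : finType) (e : rel T) (I : {set T}) u v :
  u \in I -> v \in I -> u != v ->
  factor_adj e I u v = ~~ (nbhd e u \subset nbhd e v) && ~~ (nbhd e v \subset nbhd e u).
Proof.
move=> hu hv huv; rewrite /factor_adj hu hv huv /= /sigma muln_gt0 /eta.
by rewrite !diff_gt0 setIC diff_gt0.
Qed.

Lemma abstract (R : nat -> nat -> bool) (n : nat) : 0 < n ->
  (forall a b c, R a b -> R b c -> R a c) ->
  (forall i, ~~ R i i.+1 /\ ~~ R i.+1 i) ->
  (forall i, R i (i+2) || R (i+2) i) ->
  (forall i, R i (i+3) || R (i+3) i) ->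
  (forall i j, R i (j + n) = R i j) ->
  ~~ R 0 2.
Proof.
move=> n0 tr H1 H2 H3 Hp; apply/negP => h02.
have step : forall i, R i (i+2) -> R i (i+3) /\ R i.+1 (i.+1 + 2).
  move=> i hi.
  have hi3 : R i (i+3).
    case/orP: (H3 i) => // h; case: (H1 (i+2)) => _ /negP; case.
    have -> : (i+2).+1 = i+3 by lia.
    exact: tr h hi.
  split => //.
  case/orP: (H2 i.+1) => //; rewrite addSn -addnS => h.
  case: (H1 i) => /negP; case; exact: tr hi3 h.
have all2 : forall k, R k (k+2) /\ R k (k+3).
  elim=> [|k [IH _]].
    by case: (step 0 h02).
  case: (step k IH) => _ h.
  case: (step k.+1 h) => h3 _.
  by split.
have chain : forall m, R 0 (3 + 2 * m).
  elim=> [|m IH]; first by case: (all2 0).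
  apply: tr IH _.
  have -> : 3 + 2 * m.+1 = (3 + 2 * m) + 2 by lia.
  by case: (all2 (3 + 2 * m)).
have := chain n.-1.
have -> : 3 + 2 * n.-1 = 1 + n + n by lia.
rewrite !Hp => h; case: (H1 0) => /negP; case; exact h.
Qed.

Lemma modadd a d n : a < n -> d <= n ->
  (a + d) %% n = if a + d < n then a + d else a + d - n.
Proof.
move=> an dn; case: ifP => h; first by rewrite modn_small.
have -> : a + d = (a + d - n) + n by lia.
rewrite modnDr modn_small; lia.
Qed.

Theorem theorem3p3 (T : finType) (e : rel T) (K I : {set T}) (c : seq T) :
  split_graph e K I -> induced_cycle e I c -> size c <= 4.
Proof.
move=> _ [hs hu hI hc]; rewrite leqNgt; apply/negP => n5.
have x0 : T by case: c hs {hu hI hc n5} => // x.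
set n := size c in hs hc n5.
have n0 : 0 < n by lia.
pose f i := nbhd e (nth x0 c (i %% n)).
have adjF : forall a b, a < n -> b < n -> a != b ->
   factor_adj e I (nth x0 c a) (nth x0 c b) =
   ~~ (nbhd e (nth x0 c a) \subset nbhd e (nth x0 c b)) &&
   ~~ (nbhd e (nth x0 c b) \subset nbhd e (nth x0 c a)).
  move=> a b an bn ab; apply: adjE.
  - exact: (allP hI _ (mem_nth x0 an)).
  - exact: (allP hI _ (mem_nth x0 bn)).
  - by rewrite nth_uniq.
have Hd : forall k d, d <= 3 -> (k + d) %% n = (k %% n + d) %% n.
  by move=> k d _; rewrite modnDml.
have H1 : forall i, ~~ (f i \subset f i.+1) /\ ~~ (f i.+1 \subset f i).
  move=> i; rewrite /f -addn1 Hd //.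
  have an : i %% n < n by rewrite ltn_mod.
  move: (i %% n) an => a an.
  have := (hc x0 a ((a + 1) %% n) an (ltn_pmod _ n0)).2.
  rewrite adjF ?ltn_mod //; last by rewrite (@modadd a 1 n an); try lia; case: ifP; lia.
  case/(_ _)/andP; first by left; rewrite addn1.
  by move=> -> ->.
have Hnon : forall i d, 2 <= d <= 3 -> (f i \subset f (i + d)) || (f (i + d) \subset f i).
  move=> i d hd; rewrite /f Hd; last by lia.
  have an : i %% n < n by rewrite ltn_mod.
  move: (i %% n) an => a an.
  have := (hc x0 a ((a + d) %% n) an (ltn_pmod _ n0)).1.
  rewrite adjF ?ltn_mod //; last by rewrite (@modadd a d n an); [case: ifP|..]; lia.
  move=> h; apply/negPn/negP; rewrite negb_or => /h.
  have bE : (a + d) %% n = if a + d < n then a + d else a + d - n by apply: modadd; lia.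
  have bn : (a + d) %% n < n by rewrite ltn_pmod.
  move: ((a + d) %% n) bE bn => b bE bn.
  rewrite -(addn1 b) -(addn1 a) (@modadd b 1 n bn) ?(@modadd a 1 n an) //; try lia.
  rewrite bE; case: ifP; case: ifP; case: ifP; lia.
have := @abstract (fun i j => f i \subset f j) n n0.
have := @abstract (fun i j => f j \subset f i) n n0.
have Pn : forall j, f (j + n) = f j by move=> j; rewrite /f modnDr.
move=> A B.
have nA := A (fun a b c h1 h2 => subset_trans h2 h1) (fun i => let: conj x y := H1 i in conj y x)
   (fun i => ltac:(by rewrite orbC; exact: Hnon i 2 isT)) (fun i => ltac:(by rewrite orbC; exact: Hnon i 3 isT)) (fun i j => ltac:(by rewrite /= Pn)).
have nB := B (fun a b c h1 h2 => subset_trans h1 h2) H1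
   (fun i => Hnon i 2 isT) (fun i => Hnon i 3 isT) (fun i j => ltac:(by rewrite /= Pn)).
by move: (Hnon 0 2 isT); rewrite (negbTE nA) (negbTE nB).
Qed.
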